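(* For every real Banach space $X$ with $\dim X\ge 2$ and all $\alpha,\beta>0$, $$DW(X,\alpha,\beta)\ge(\alpha+\beta)\max\{2\rho_X'(0),1\}.$$
   Context: For $\alpha,\beta>0$, $$DW(X,\alpha,\beta)=\sup\left\{\frac{\alpha\|x\|+\beta\|y\|}{\|x-y\|}\left\|\frac{x}{\|x\|}-\frac{y}{\|y\|}\right\|: x,y\in X\setminus\{0\},\ x\neq y\right\}.$$ The Lindenstrauss modulus of smoothness is $\rho_X(t)=\sup\{\tfrac12(\|x+ty\|+\|x-ty\|)-1: x,y\in B_X\}$ for $t\ge0$ ($B_X$ the closed unit ball), and $\rho_X'(0)=\lim_{t\to0^+}\rho_X(t)/t$ is the characteristic of smoothness. *)

(* Defs.v *)
From HB Require Import structures.
From mathcomp Require Import all_boot all_order all_algebra.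
From mathcomp Require Import all_classical all_reals all_analysis.
Set Implicit Arguments. Unset Strict Implicit. Unset Printing Implicit Defensive.
Import Order.TTheory GRing.Theory Num.Theory.
Import numFieldNormedType.Exports.
Local Open Scope classical_set_scope.
Local Open Scope ring_scope.

Definition DW (R : realType) (X : normedModType R) (alpha beta : R) : \bar R :=
  ereal_sup [set r : \bar R | exists x y : X,
     [/\ x != 0, y != 0, x != y &
      r = ((alpha * `|x| + beta * `|y|) / `|x - y|
           * `| `|x|^-1 *: x - `|y|^-1 *: y |)%:E]].

Definition rho (R : realType) (X : normedModType R) (t : R) : R :=
  sup [set r : R | exists x y : X,
     [/\ `|x| <= 1, `|y| <= 1 & r = (`|x + t *: y| + `|x - t *: y|) / 2 - 1]].

Definition rho'0 (R : realType) (X : normedModType R) : R :=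
  lim (rho X t / t @[t --> 0^'+]).

Definition dim_ge2 (R : realType) (X : normedModType R) : Prop :=
  exists x y : X, forall a b : R, a *: x + b *: y = 0 -> a = 0 /\ b = 0.

(* Main.v *)
Require Import Defs.
From HB Require Import structures.
From mathcomp Require Import all_boot all_order all_algebra.
From mathcomp Require Import all_classical all_reals all_analysis.
From mathcomp Require Import ring lra.
Import Order.TTheory GRing.Theory Num.Theory.
Import numFieldNormedType.Exports.
Local Open Scope ring_scope.

Lemma arith (R : realType) (a b t n A B P Dg : R) :
  0 < a -> 0 < b -> 0 < t -> 0 < P -> P <= t -> 0 < n -> A - t <= n ->
  1/2 <= A -> A + B - 2 <= 2 * t -> 0 < A + B - 2 -> (A + B - 2) / A <= Dg ->
  (a + b) * ((A + B - 2) / t) - 4 * a * t <= (a * n + b * A) / P * Dg.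
Proof.
move=> a0 b0 t0 P0 Pt n0 nA A12 D2 D0 hD.
have A0 : 0 < A by lra.
have K0 : 0 < a * n + b * A by nra.
have E0 : 0 < (A + B - 2) / A by rewrite divr_gt0.
have s1 : (a * n + b * A) / t * ((A + B - 2) / A) <= (a * n + b * A) / P * Dg.
  apply: ler_pM => //; first by rewrite ltW // divr_gt0.
  by rewrite ltW.
  by rewrite ler_pM2l // lef_pV2 // posrE.
apply: le_trans s1.
have -> : (a * n + b * A) / t * ((A + B - 2) / A) =
          ((a * n + b * A) / A) * ((A + B - 2) / t).
  by ring.
set iA := A^-1. set u := (A + B - 2) / t.
have hiA : iA * A = 1 by rewrite mulVf // gt_eqF.
have iA2 : iA <= 2 by nra.
have iA0 : 0 < iA by rewrite invr_gt0.
have u0 : 0 < u by rewrite divr_gt0.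
have u2 : u <= 2.
  rewrite /u ler_pdivrMr //; lra.
have k : a + b - 2 * a * t <= (a * n + b * A) * iA.
  have : 0 <= a * iA * (n - A + t) by apply: mulr_ge0; [apply: mulr_ge0; lra| lra].
  have : 0 <= a * t * (2 - iA) by apply: mulr_ge0; [apply: mulr_ge0; lra| lra].
  nra.
have h1 : 0 <= ((a * n + b * A) * iA - (a + b - 2 * a * t)) * u by apply: mulr_ge0; lra.
have h2 : 0 <= a * t * (2 - u) by apply: mulr_ge0; [apply: mulr_ge0; lra| lra].
nra.
Qed.

Lemma key_real (R : realType) (X : normedModType R) (a b t : R) (x y : X) :
  0 < a -> 0 < b -> 0 < t -> t <= 1/4 -> `|x| <= 1 -> `|y| <= 1 ->
  0 < `|x + t *: y| + `|x - t *: y| - 2 ->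
  exists r : R, [/\ x != 0, x + t *: y != 0, x != x + t *: y &
    r = (a * `|x| + b * `|x + t *: y|) / `|x - (x + t *: y)|
           * `| `|x|^-1 *: x - `|x + t *: y|^-1 *: (x + t *: y) | ] /\
   (a + b) * ((`|x + t *: y| + `|x - t *: y| - 2) / t) - 4 * a * t <= r.
Proof.
move=> a0 b0 t0 t14 x1 y1 D0.
have nty : `|t *: y| = t * `|y| by rewrite normrZ gtr0_norm.
have tyt : t * `|y| <= t by rewrite -[leRHS]mulr1 ler_wpM2l // ltW.
have ny0 : 0 <= `|y| := normr_ge0 y.
have hA : `|x + t *: y| <= `|x| + t.
  have := ler_normD x (t *: y); rewrite nty; lra.
have hB : `|x - t *: y| <= `|x| + t.
  have := ler_normB x (t *: y); rewrite nty; lra.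
have hA2 : `|x| - t <= `|x + t *: y|.
  have := ler_normB (x + t *: y) (t *: y); rewrite addrK nty; lra.
have n1 : 1 - t < `|x| by lra.
have A12 : 1/2 <= `|x + t *: y| by lra.
have y0 : y != 0.
  apply/negP => /eqP y0; move: D0; rewrite y0 scaler0 addr0 subr0; lra.
have ny : 0 < `|y| by rewrite normr_gt0.
have xq : x - (x + t *: y) = - (t *: y) by rewrite opprD addrA subrr add0r.
have dist : `|x - (x + t *: y)| = t * `|y| by rewrite xq normrN nty.
set n := `|x|; set A := `|x + t *: y|; set B := `|x - t *: y|.
have n0 : 0 < n by rewrite /n; lra.
have A0 : 0 < A by rewrite /A; lra.
have nA0 : n != 0 by rewrite gt_eqF.
have AA0 : A != 0 by rewrite gt_eqF.
have e1 : n^-1 *: x - A^-1 *: (x + t *: y) = (n^-1 - A^-1) *: x + (- (A^-1 * t)) *: y.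
  by rewrite scalerDr scalerA scalerBl scaleNr opprD addrA.
have e2 : n *: (x - t *: y) - (2 * n - A) *: x = (n - (2 * n - A)) *: x + (- (n * t)) *: y.
  by rewrite scalerBr scalerA !scalerBl scaleNr addrAC.
have e3 : n^-1 *: x - A^-1 *: (x + t *: y) = (n * A)^-1 *: (n *: (x - t *: y) - (2 * n - A) *: x).
  rewrite e1 e2 scalerDr !scalerA; congr (_ *: _ + _ *: _); field; by apply/andP.
have W : n * (A + B - 2) <= `|n *: (x - t *: y) - (2 * n - A) *: x|.
  apply: le_trans (lerB_dist _ _).
  rewrite !normrZ (gtr0_norm n0) (ger0_norm (_ : 0 <= 2 * n - A)); last by rewrite /A /n; lra.
  have n1' : n <= 1 := x1. rewrite -/B -/n; clearbody n A B. rewrite -subr_ge0. have -> : n * B - (2 * n - A) * n - n * (A + B - 2) = 2 * (n * (1 - n)) by ring. apply: mulr_ge0 => //; apply: mulr_ge0; lra.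
exists ((a * n + b * A) / `|x - (x + t *: y)|
           * `| n^-1 *: x - A^-1 *: (x + t *: y) |); split.
  split => //.
  - by rewrite -normr_gt0.
  - by rewrite -normr_gt0.
  - by rewrite -subr_eq0 -normr_gt0 dist mulr_gt0.
rewrite dist; apply: arith => //; first by rewrite mulr_gt0.
- by rewrite /A /n; lra.
- by rewrite /A /B /n; lra.
rewrite e3 normrZ gtr0_norm ?invr_gt0 ?mulr_gt0 //.
apply: le_trans (_ : (n * A)^-1 * (n * (A + B - 2)) <= _).
  by rewrite le_eqVlt; apply/orP; left; apply/eqP; field; apply/andP.
by rewrite ler_pM2l // invr_gt0 mulr_gt0.
Qed.

Local Open Scope classical_set_scope.

Lemma DW_ge_base (R : realType) (X : normedModType R) (a b : R) (x : X) :
  0 < a -> 0 < b -> x != 0 -> ((a + b)%:E <= DW X a b)%E.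
Proof.
move=> a0 b0 x0.
have nx : 0 < `|x| by rewrite normr_gt0.
rewrite /DW; apply: ereal_sup_ubound => /=.
exists x, (- x); split => //.
- by rewrite oppr_eq0.
- apply/negP => /eqP h; move: nx.
  have : x + x = 0 by rewrite {1}h addNr.
  rewrite -mulr2n -scaler_nat => /eqP; rewrite scaler_eq0 pnatr_eq0 /= => /eqP ->.
  by rewrite normr0 ltxx.
- congr (_%:E).
  rewrite opprK normrN -mulr2n normrMn scalerN opprK -mulr2n normrMn normrZ.
  rewrite gtr0_norm ?invr_gt0 // mulVf ?gt_eqF //.
  rewrite -mulrDl -mulr_natr; field; by rewrite gt_eqF.
Qed.

Lemma DW_ge_key (R : realType) (X : normedModType R) (a b t : R) (x y : X) :
  0 < a -> 0 < b -> 0 < t -> t <= 1/4 -> `|x| <= 1 -> `|y| <= 1 ->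
  ((a + b)%:E <= DW X a b)%E ->
  (((a + b) * ((`|x + t *: y| + `|x - t *: y| - 2) / t) - 4 * a * t)%:E
     <= DW X a b)%E.
Proof.
move=> a0 b0 t0 t14 x1 y1 hb.
have [D0|D0] := ltP 0 (`|x + t *: y| + `|x - t *: y| - 2).
  have [r [[h1 h2 h3 h4] hr]] := @key_real _ _ a b t x y a0 b0 t0 t14 x1 y1 D0.
  apply: le_trans (_ : r%:E <= _)%E; first by rewrite lee_fin.
  rewrite /DW; apply: ereal_sup_ubound => /=.
  by exists x, (x + t *: y); split => //; rewrite h4.
apply: le_trans hb; rewrite lee_fin.
have : (a + b) * ((`|x + t *: y| + `|x - t *: y| - 2) / t) <= 0.
  rewrite pmulr_rle0 ?addr_gt0 //; rewrite pmulr_lle0 ?invr_gt0 //.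
nra.
Qed.

Lemma rho_has_sup (R : realType) (X : normedModType R) (t : R) :
  has_sup [set r : R | exists x y : X,
     [/\ `|x| <= 1, `|y| <= 1 & r = (`|x + t *: y| + `|x - t *: y|) / 2 - 1]].
Proof.
split.
  exists (-1); exists 0, 0; split; rewrite ?normr0 //.
  by rewrite scaler0 addr0 subr0 normr0 addr0 mul0r sub0r.
exists `|t|; move=> r [x [y [hx hy ->]]].
have h1 := ler_normD x (t *: y); have h2 := ler_normB x (t *: y).
rewrite normrZ in h1 h2.
have : `|t| * `|y| <= `|t| by rewrite -[leRHS]mulr1 ler_wpM2l.
lra.
Qed.

Theorem theorem4 (R : realType) (X : completeNormedModType R)
  (alpha beta : R) :
  dim_ge2 X -> 0 < alpha -> 0 < beta ->
  (((alpha + beta) * Num.max (2 * rho'0 X) 1)%:E <= DW X alpha beta)%E.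
Proof.
move=> [u [v huv]] a0 b0.
have u0 : u != 0.
  apply/negP => /eqP u0; have := huv 1 0; rewrite u0 scaler0 scale0r addr0.
  by move=> /(_ erefl) [] /eqP; rewrite oner_eq0.
have hb := @DW_ge_base _ _ alpha beta u a0 b0 u0.
case: (pselect (cvg (rho X t / t @[t --> 0^'+]))) => [hc|hnc]; last first.
  rewrite /rho'0 dvgP //.
  have -> : (point : R) = 0 by [].
  by rewrite mulr0 max_r // mulr1.
have HL : (rho X t / t @[t --> 0^'+]) --> rho'0 X := hc.
set L := rho'0 X in HL *.
move: hb; case E: (DW X alpha beta) => [d| |] hb //; last by rewrite leey.
rewrite lee_fin in hb *.
have [h|h] := leP (2 * L) 1; first by rewrite mulr1.
idtac.
apply/ler_addgt0Pr => e e0.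
set K := 4 * (alpha + beta) + 4 * alpha.
have K0 : 0 < K by rewrite /K; lra.
set dl := e / K.
have dl0 : 0 < dl by rewrite divr_gt0.
have dlK : dl * K = e by rewrite /dl mulfVK // gt_eqF.
have H : \forall t \near 0^'+,
    [/\ 0 < t, t <= 1/4, t < dl & `|L - rho X t / t| < dl].
  near=> t; split; near: t.
  - exact: nbhs_right_gt.
  - by apply: nbhs_right_le; lra.
  - exact: nbhs_right_lt.
  - by move/cvgrPdist_lt : HL; apply.
have [t [t0 t14 tdl tL]] := filter_ex H.
have [r [x [y [x1 y1 ->]]] hr] :=
  sup_adherent (mulr_gt0 dl0 t0) (@rho_has_sup _ X t).
have := @DW_ge_key _ _ alpha beta t x y a0 b0 t0 t14 x1 y1.
rewrite E !lee_fin => /(_ hb) hd.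
rewrite -/(rho X t) in hr.
move: tL; rewrite ltr_norml => /andP [tL1 tL2].
set q := rho X t / t in tL1 tL2.
have qt : q * t = rho X t by rewrite /q mulfVK // gt_eqF.
set w := (`|x + t *: y| + `|x - t *: y| - 2) / t in hd.
have wt : w * t = `|x + t *: y| + `|x - t *: y| - 2 by rewrite /w mulfVK // gt_eqF.
have hw : 2 * L - 4 * dl < w.
  have : 2 * q - 2 * dl < w.
    rewrite -(ltr_pM2r t0); nra.
  lra.
have : (alpha + beta) * (2 * L - 4 * dl) <= (alpha + beta) * w.
  by rewrite ler_pM2l ?addr_gt0 // ltW.
move=> h2; have h3 : alpha * t <= alpha * dl by rewrite ler_pM2l // ltW.
rewrite -dlK /K; nra.
Unshelve. all: end_near.
Qed.
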